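(* Let $f:\mathbb{R}^n\to\mathbb{R}\cup\{\infty\}$ be finite and Lipschitz continuous near $\bar x$ and subdifferentially regular at $\bar x$, i.e. $\hat\partial f(\bar x)=\partial f(\bar x)$. Then $\operatorname{calm}f(\bar x)=\operatorname{lip}f(\bar x)$.
   Context: $\operatorname{calm}f(\bar x):=\limsup_{x\to\bar x,\,x\ne\bar x}\frac{|f(x)-f(\bar x)|}{|x-\bar x|}$ and $\operatorname{lip}f(\bar x):=\limsup_{x,x'\to\bar x,\,x\ne x'}\frac{|f(x)-f(x')|}{|x-x'|}$. A vector $v$ is a regular subgradient, $v\in\hat\partial f(\bar x)$, if $f(x)\ge f(\bar x)+\langle v,x-\bar x\rangle+o(|x-\bar x|)$; $v$ is a (general) subgradient, $v\in\partial f(\bar x)$, if there are $x^\nu\to\bar x$ and $v^\nu\in\hat\partial f(x^\nu)$ with $v^\nu\to v$ and $f(x^\nu)\to f(\bar x)$. *)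

(* Defs.v *)
From Stdlib Require Import Reals Lra.
Open Scope R_scope.

Definition Rn (n : nat) : Type := { x : nat -> R | forall i, (n <= i)%nat -> x i = 0 }.

Fixpoint sumprod (k : nat) (g h : nat -> R) : R :=
  match k with
  | O => 0
  | S k => sumprod k g h + g k * h k
  end.

Definition inner {n : nat} (x y : Rn n) : R := sumprod n (proj1_sig x) (proj1_sig y).
Definition diff {n : nat} (x y : Rn n) : nat -> R := fun i => proj1_sig x i - proj1_sig y i.
Definition dist {n : nat} (x y : Rn n) : R := sqrt (sumprod n (diff x y) (diff x y)).
Definition inner_diff {n : nat} (v x y : Rn n) : R := sumprod n (proj1_sig v) (diff x y).

Inductive ER : Type := ERfin (r : R) | ERpinf | ERminf.

Definition ER_le (a b : ER) : Prop :=
  match a, b with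
  | ERminf, _ => True
  | _, ERpinf => True
  | ERfin x, ERfin y => x <= y
  | _, _ => False
  end.

Definition is_lub_ER (S : ER -> Prop) (s : ER) : Prop :=
  (forall a, S a -> ER_le a s) /\ (forall u, (forall a, S a -> ER_le a u) -> ER_le s u).
Definition is_glb_ER (S : ER -> Prop) (s : ER) : Prop :=
  (forall a, S a -> ER_le s a) /\ (forall u, (forall a, S a -> ER_le u a) -> ER_le u s).

Definition is_limsup (S : R -> ER -> Prop) (l : ER) : Prop :=
  is_glb_ER (fun s => exists d, 0 < d /\ is_lub_ER (S d) s) l.

(** f : R^n -> R u {+oo}, with None = +oo.  Difference quotient |a - b| / d,
    with the convention that it is +oo when a value is infinite. *)
Definition dq (a b : option R) (d : R) : ER :=
  match a, b with
  | Some a, Some b => ERfin (Rabs (a - b) / d)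
  | _, _ => ERpinf
  end.

Definition calm_set {n : nat} (f : Rn n -> option R) (xb : Rn n) (d : R) : ER -> Prop :=
  fun q => exists x, x <> xb /\ dist x xb < d /\ q = dq (f x) (f xb) (dist x xb).

Definition lip_set {n : nat} (f : Rn n -> option R) (xb : Rn n) (d : R) : ER -> Prop :=
  fun q => exists x x', x <> x' /\ dist x xb < d /\ dist x' xb < d /\
                        q = dq (f x) (f x') (dist x x').

Definition is_calm {n : nat} (f : Rn n -> option R) (xb : Rn n) (c : ER) : Prop :=
  is_limsup (calm_set f xb) c.
Definition is_lip {n : nat} (f : Rn n -> option R) (xb : Rn n) (c : ER) : Prop :=
  is_limsup (lip_set f xb) c.

Definition finite_lipschitz_near {n : nat} (f : Rn n -> option R) (xb : Rn n) : Prop :=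
  exists d L, 0 < d /\
    forall x x', dist x xb < d -> dist x' xb < d ->
      exists a b, f x = Some a /\ f x' = Some b /\ Rabs (a - b) <= L * dist x x'.

Definition regular_subgradient {n : nat} (f : Rn n -> option R) (xb v : Rn n) : Prop :=
  exists fb, f xb = Some fb /\
    forall eps, 0 < eps -> exists d, 0 < d /\
      forall x, dist x xb < d ->
        match f x with
        | None => True
        | Some fx => fx >= fb + inner_diff v x xb - eps * dist x xb
        end.

Definition subgradient {n : nat} (f : Rn n -> option R) (xb v : Rn n) : Prop :=
  exists (xs vs : nat -> Rn n) (fs : nat -> R) (fb : R),
    Un_cv (fun k => dist (xs k) xb) 0 /\
    (forall k, regular_subgradient f (xs k) (vs k)) /\
    Un_cv (fun k => dist (vs k) v) 0 /\
    (forall k, f (xs k) = Some (fs k)) /\ f xb = Some fb /\ Un_cv fs fb.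

(* Main.v *)
Require Import Defs.
From Stdlib Require Import Reals Ratan Lra Lia Psatz Classical ClassicalEpsilon FunctionalExtensionality ProofIrrelevance.
Require Import Defs.
Open Scope R_scope.

Lemma sp_ext : forall k g g' h h', (forall i, (i < k)%nat -> g i = g' i /\ h i = h' i) ->
  sumprod k g h = sumprod k g' h'.
Proof.
  induction k; intros; simpl; auto.
  destruct (H k) as [-> ->]; [lia|]. rewrite (IHk g g' h h'); auto.
Qed.

Lemma sp_sym : forall k g h, sumprod k g h = sumprod k h g.
Proof. induction k; intros; simpl; [auto| rewrite IHk; ring]. Qed.

Lemma sp_linl : forall k a b g1 g2 h,
  sumprod k (fun i => a * g1 i + b * g2 i) h = a * sumprod k g1 h + b * sumprod k g2 h.
Proof. induction k; intros; simpl; [ring| rewrite IHk; ring]. Qed.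

Lemma sp_linr : forall k a b g h1 h2,
  sumprod k g (fun i => a * h1 i + b * h2 i) = a * sumprod k g h1 + b * sumprod k g h2.
Proof. intros. rewrite sp_sym, sp_linl, (sp_sym k h1), (sp_sym k h2). ring. Qed.

Lemma sp_scall : forall k a g h, sumprod k (fun i => a * g i) h = a * sumprod k g h.
Proof. induction k; intros; simpl; [ring| rewrite IHk; ring]. Qed.

Lemma sp_pos : forall k g, 0 <= sumprod k g g.
Proof. induction k; intros; simpl; [lra| specialize (IHk g); nra]. Qed.

Lemma sp_zero : forall k g, sumprod k g g = 0 -> forall i, (i < k)%nat -> g i = 0.
Proof.
  induction k; intros; simpl in *; [lia|].
  pose proof (sp_pos k g).
  assert (g k * g k = 0) by nra. assert (sumprod k g g = 0) by nra.
  destruct (Nat.eq_dec i k). subst; nra. apply IHk; auto; lia.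
Qed.

Lemma sp_coord : forall k g i, (i < k)%nat -> g i * g i <= sumprod k g g.
Proof.
  induction k; intros; simpl; [lia|].
  pose proof (sp_pos k g).
  destruct (Nat.eq_dec i k). subst; nra. specialize (IHk g i ltac:(lia)). nra.
Qed.

Lemma CS_sq : forall k g h, sumprod k g h * sumprod k g h <= sumprod k g g * sumprod k h h.
Proof.
  induction k; intros; simpl; [lra|].
  specialize (IHk g h). pose proof (sp_pos k g). pose proof (sp_pos k h).
  set (A := sumprod k g h) in *. set (G := sumprod k g g) in *. set (HH := sumprod k h h) in *.
  set (a := g k). set (b := h k).
  assert (Hk: 2 * A * a * b <= G * b * b + HH * a * a).
  { assert (0 <= G * b * b + HH * a * a) by nra.
    assert ((2*A*a*b)*(2*A*a*b) <= (G * b * b + HH * a * a) * (G * b * b + HH * a * a)).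
    { assert (4*(A*A)*(a*a*(b*b)) <= 4*(G*HH)*(a*a*(b*b))) by (apply Rmult_le_compat_r; nra).
      assert (0 <= (G*b*b - HH*a*a)*(G*b*b - HH*a*a)) by apply Rle_0_sqr. nra. }
    destruct (Rle_dec (2*A*a*b) 0). lra.
    apply Rsqr_incr_0_var; unfold Rsqr; lra. }
  nra.
Qed.

Definition nrm (k : nat) (g : nat -> R) := sqrt (sumprod k g g).

Lemma nrm_pos : forall k g, 0 <= nrm k g.
Proof. intros; apply sqrt_pos. Qed.

Lemma nrm_sq : forall k g, nrm k g * nrm k g = sumprod k g g.
Proof. intros; apply sqrt_sqrt, sp_pos. Qed.

Lemma CS : forall k g h, Rabs (sumprod k g h) <= nrm k g * nrm k h.
Proof.
  intros. rewrite <- (Rabs_pos_eq (nrm k g * nrm k h)) by (apply Rmult_le_pos; apply nrm_pos).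
  apply (Rsqr_le_abs_0 (sumprod k g h)). rewrite Rsqr_mult. unfold Rsqr. rewrite !nrm_sq. apply CS_sq.
Qed.

Lemma CS1 : forall k g h, sumprod k g h <= nrm k g * nrm k h.
Proof. intros. pose proof (CS k g h). pose proof (Rle_abs (sumprod k g h)). lra. Qed.

Lemma nrm_le_sq : forall k g c, 0 <= c -> sumprod k g g <= c * c -> nrm k g <= c.
Proof.
  intros. unfold nrm. rewrite <- (sqrt_square c) by auto. apply sqrt_le_1_alt. lra.
Qed.

Lemma nrm_triang : forall k g h, nrm k (fun i => g i + h i) <= nrm k g + nrm k h.
Proof.
  intros. apply nrm_le_sq. pose proof (nrm_pos k g); pose proof (nrm_pos k h); lra.
  replace (fun i => g i + h i) with (fun i => 1 * g i + 1 * h i) by (apply functional_extensionality; intros; ring).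
  rewrite sp_linl, !sp_linr. rewrite (sp_sym k h g).
  pose proof (CS1 k g h). rewrite <- !nrm_sq. nra.
Qed.

Lemma nrm_scal : forall k a g, nrm k (fun i => a * g i) = Rabs a * nrm k g.
Proof.
  intros. unfold nrm. rewrite sp_scall, sp_sym, sp_scall.
  replace (a * (a * sumprod k g g)) with (Rsqr a * sumprod k g g) by (unfold Rsqr; ring).
  rewrite sqrt_mult_alt by apply Rle_0_sqr. rewrite sqrt_Rsqr_abs. auto.
Qed.

Lemma coord_le_nrm : forall k g i, (i < k)%nat -> Rabs (g i) <= nrm k g.
Proof.
  intros. unfold nrm. rewrite <- sqrt_Rsqr_abs. apply sqrt_le_1_alt. unfold Rsqr. apply sp_coord; auto.
Qed.

Lemma nrm_zero : forall k g, nrm k g = 0 -> forall i, (i < k)%nat -> g i = 0.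
Proof.
  intros. apply (sp_zero k); auto. rewrite <- nrm_sq, H. ring.
Qed.

Definition pt {n} (x : Rn n) : nat -> R := proj1_sig x.

Lemma mkRn_pf (n : nat) (h : nat -> R) :
  forall i, (n <= i)%nat -> (if Nat.ltb i n then h i else 0) = 0.
Proof. intros. destruct (Nat.ltb_spec i n); [lia|auto]. Qed.

Definition mkRn (n : nat) (h : nat -> R) : Rn n := exist _ _ (mkRn_pf n h).

Lemma mkRn_pt n h i : (i < n)%nat -> pt (mkRn n h) i = h i.
Proof. intros; unfold pt, mkRn; simpl. destruct (Nat.ltb_spec i n); [auto|lia]. Qed.

Lemma dist_nrm {n} (x y : Rn n) : dist x y = nrm n (diff x y).
Proof. reflexivity. Qed.

Lemma dist_pos {n} (x y : Rn n) : 0 <= dist x y.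
Proof. apply sqrt_pos. Qed.

Lemma dist_self {n} (x : Rn n) : dist x x = 0.
Proof.
  unfold dist. replace (sumprod n (diff x x) (diff x x)) with 0. apply sqrt_0.
  unfold diff. generalize (proj1_sig x) as g; intros g. clear. induction n; simpl; [auto| rewrite <- IHn; ring].
Qed.

Lemma dist_sym {n} (x y : Rn n) : dist x y = dist y x.
Proof.
  unfold dist. f_equal. unfold diff. generalize (proj1_sig x) (proj1_sig y). clear.
  intros g h. induction n; simpl; [auto| rewrite IHn; ring].
Qed.

Lemma dist_triang {n} (x y z : Rn n) : dist x z <= dist x y + dist y z.
Proof.
  rewrite !dist_nrm. pose proof (nrm_triang n (diff x y) (diff y z)).
  replace (nrm n (diff x z)) with (nrm n (fun i => diff x y i + diff y z i)); auto.
  unfold nrm; f_equal; apply sp_ext; intros; unfold diff; split; ring.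
Qed.

Lemma Rn_eq {n} (x y : Rn n) : (forall i, (i < n)%nat -> pt x i = pt y i) -> x = y.
Proof.
  destruct x as [x px], y as [y py]; unfold pt; simpl; intros.
  assert (x = y). { apply functional_extensionality; intros i.
    destruct (Nat.lt_ge_cases i n). auto. rewrite px, py; auto. }
  subst. f_equal. apply proof_irrelevance.
Qed.

Lemma dist_eq0 {n} (x y : Rn n) : dist x y = 0 -> x = y.
Proof.
  intros. apply Rn_eq; intros. pose proof (nrm_zero n (diff x y) H i H0). unfold diff in H1. unfold pt. lra.
Qed.

Lemma dist_coord {n} (x y : Rn n) i : (i < n)%nat -> Rabs (pt x i - pt y i) <= dist x y.
Proof. intros; apply (coord_le_nrm n (diff x y) i H). Qed.

Definition nv {n} (v : Rn n) := nrm n (pt v).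

Definition lin {n} (a : R) (x : Rn n) (b : R) (y : Rn n) : Rn n :=
  mkRn n (fun i => a * pt x i + b * pt y i).

Lemma dist_ray {n} (x v : Rn n) t : dist (lin 1 x t v) x = Rabs t * nv v.
Proof.
  unfold dist, nv. rewrite <- nrm_scal. unfold nrm; f_equal. apply sp_ext; intros; unfold diff.
  fold (pt (lin 1 x t v)). unfold lin. rewrite mkRn_pt; auto. unfold pt; split; ring.
Qed.

Lemma inner_ray {n} (x v : Rn n) t : inner_diff v (lin 1 x t v) x = t * sumprod n (pt v) (pt v).
Proof.
  unfold inner_diff. rewrite <- sp_scall, sp_sym. apply sp_ext; intros; unfold diff.
  fold (pt (lin 1 x t v)). unfold lin. rewrite mkRn_pt; auto. unfold pt; split; ring.
Qed.

Lemma ER_le_refl a : ER_le a a.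
Proof. destruct a; simpl; auto; lra. Qed.

Lemma ER_le_trans a b c : ER_le a b -> ER_le b c -> ER_le a c.
Proof. destruct a, b, c; simpl; auto; try lra; tauto. Qed.

Lemma ER_le_antisym a b : ER_le a b -> ER_le b a -> a = b.
Proof. destruct a, b; simpl; try tauto. intros; f_equal; lra. Qed.

Lemma ER_le_total a b : ER_le a b \/ ER_le b a.
Proof. destruct a, b; simpl; auto. lra. Qed.

Lemma lub_unique S a b : is_lub_ER S a -> is_lub_ER S b -> a = b.
Proof. intros [H1 H2] [H3 H4]. apply ER_le_antisym; auto. Qed.

Lemma glb_unique S a b : is_glb_ER S a -> is_glb_ER S b -> a = b.
Proof. intros [H1 H2] [H3 H4]. apply ER_le_antisym; auto. Qed.

Lemma lub_exists S : exists s, is_lub_ER S s.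
Proof.
  destruct (classic (S ERpinf)) as [Hp|Hp].
  { exists ERpinf; split. intros a _; destruct a; simpl; auto.
    intros u Hu. apply Hu in Hp. destruct u; simpl in *; auto. }
  destruct (classic (exists r, S (ERfin r))) as [[r0 Hr0]|Hne].
  - destruct (classic (bound (fun r => S (ERfin r)))) as [Hb|Hub].
    + destruct (completeness (fun r => S (ERfin r)) Hb (ex_intro _ r0 Hr0)) as [l [Hl1 Hl2]].
      exists (ERfin l); split.
      * intros a Ha; destruct a; simpl; auto.
      * intros u Hu. destruct u; simpl; auto.
        -- apply Hl2. intros x Hx. apply (Hu _ Hx).
        -- apply (Hu _ Hr0).
    + exists ERpinf; split. intros a _; destruct a; simpl; auto.
      intros u Hu. destruct u; simpl; auto.
      * apply Hub. exists r. intros x Hx. apply (Hu _ Hx).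
      * apply (Hu _ Hr0).
  - exists ERminf; split.
    + intros a Ha; destruct a; simpl; auto. apply Hne; eauto.
    + intros u _; destruct u; simpl; auto.
Qed.

Definition ERneg (a : ER) : ER := match a with ERfin r => ERfin (- r) | ERpinf => ERminf | ERminf => ERpinf end.

Lemma ERneg_inv a : ERneg (ERneg a) = a.
Proof. destruct a; simpl; auto. f_equal; ring. Qed.

Lemma ERneg_le a b : ER_le a b -> ER_le (ERneg b) (ERneg a).
Proof. destruct a, b; simpl; auto; lra. Qed.

Lemma glb_exists S : exists s, is_glb_ER S s.
Proof.
  destruct (lub_exists (fun a => S (ERneg a))) as [s [H1 H2]].
  exists (ERneg s); split.
  - intros a Ha. rewrite <- (ERneg_inv a) in Ha. apply H1 in Ha.
    apply ERneg_le in Ha. rewrite ERneg_inv in Ha. auto.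
  - intros u Hu. rewrite <- (ERneg_inv u). apply ERneg_le. apply H2.
    intros a Ha. apply Hu in Ha. apply ERneg_le in Ha. rewrite ERneg_inv in Ha; auto.
Qed.

Lemma inv_small : forall eps, 0 < eps -> exists N, forall k, (N <= k)%nat -> / (INR k + 1) < eps.
Proof.
  intros. destruct (archimed_cor1 eps H) as [N [HN HN0]]. exists N; intros.
  apply Rle_lt_trans with (/ INR N); auto.
  apply Rinv_le_contravar. apply lt_0_INR; lia. apply le_INR in H0. lra.
Qed.

Lemma incr_ge : forall phi : nat -> nat, (forall k, (phi k < phi (S k))%nat) -> forall k, (k <= phi k)%nat.
Proof. intros phi H k; induction k; [lia| specialize (H k); lia]. Qed.

Lemma incr_mono : forall phi : nat -> nat, (forall k, (phi k < phi (S k))%nat) -> forall j k, (j <= k)%nat -> (phi j <= phi k)%nat.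
Proof. intros phi H j k Hjk; induction Hjk; [lia| specialize (H m); lia]. Qed.

Lemma cv_sub : forall u l phi, (forall k, (phi k < phi (S k))%nat) -> Un_cv u l -> Un_cv (fun k => u (phi k)) l.
Proof.
  intros u l phi Hphi H eps Heps. destruct (H eps Heps) as [N HN]. exists N; intros.
  apply HN. pose proof (incr_ge phi Hphi n). lia.
Qed.

Lemma bw1 : forall u : nat -> R, (exists B, forall k, Rabs (u k) <= B) ->
  exists phi l, (forall k, (phi k < phi (S k))%nat) /\ Un_cv (fun k => u (phi k)) l.
Proof.
  intros u [B HB].
  destruct (Bolzano_Weierstrass u (fun c => -B <= c <= B) (compact_P3 (-B) B)) as [l Hl].
  { intros k; specialize (HB k); pose proof (Rle_abs (u k)); pose proof (Rle_abs (- u k)); rewrite Rabs_Ropp in *; lra. }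
  assert (Hn : forall N k, exists p, (N <= p)%nat /\ Rabs (u p - l) < / (INR k + 1)).
  { intros N k. assert (Hp : 0 < / (INR k + 1)). { apply Rinv_0_lt_compat. pose proof (pos_INR k); lra. }
    destruct (Hl (fun y => Rabs (y - l) < / (INR k + 1)) N) as [p Hp2].
    - exists (mkposreal _ Hp). intros y Hy. unfold disc in Hy. simpl in Hy. auto.
    - exists p; auto. }
  set (F := fun N k => proj1_sig (constructive_indefinite_description _ (Hn N k))).
  assert (HF : forall N k, (N <= F N k)%nat /\ Rabs (u (F N k) - l) < / (INR k + 1)).
  { intros; unfold F; destruct (constructive_indefinite_description _ (Hn N k)); auto. }
  set (phi := fix phi k := match k with O => F O O | S k => F (S (phi k)) (S k) end).
  exists phi, l; split.
  - intros k. simpl. destruct (HF (S (phi k)) (S k)); lia.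
  - intros eps Heps. destruct (inv_small eps Heps) as [N HN]. exists N; intros k Hk.
    unfold R_dist. apply Rlt_trans with (/ (INR k + 1)); auto.
    destruct k; simpl; apply HF.
Qed.

Lemma bwm : forall (ys : nat -> nat -> R) (m : nat),
  (forall i, (i < m)%nat -> exists B, forall k, Rabs (ys k i) <= B) ->
  exists phi l, (forall k, (phi k < phi (S k))%nat) /\
    forall i, (i < m)%nat -> Un_cv (fun k => ys (phi k) i) (l i).
Proof.
  intros ys m; induction m; intros HB.
  - exists (fun k => k), (fun _ => 0); split; intros; lia.
  - destruct IHm as [phi [l [Hphi Hl]]]. { intros; apply HB; lia. }
    destruct (HB m ltac:(lia)) as [B HBm].
    destruct (bw1 (fun k => ys (phi k) m)) as [psi [lm [Hpsi Hlm]]]. { exists B; auto. }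
    exists (fun k => phi (psi k)), (fun i => if Nat.eqb i m then lm else l i); split.
    + intros k. specialize (Hpsi k). pose proof (incr_mono phi Hphi (S (psi k)) (psi (S k)) Hpsi). specialize (Hphi (psi k)). lia.
    + intros i Hi. destruct (Nat.eqb_spec i m).
      * subst; auto.
      * apply (cv_sub (fun k => ys (phi k) i)); auto. apply Hl; lia.
Qed.

Lemma cv_sumsq : forall m (g : nat -> nat -> R) l, (forall i, (i < m)%nat -> Un_cv (fun k => g k i) (l i)) ->
  Un_cv (fun k => sumprod m (fun i => g k i - l i) (fun i => g k i - l i)) 0.
Proof.
  induction m; intros; simpl.
  - intros eps He; exists O; intros; unfold R_dist; rewrite Rminus_0_r, Rabs_R0; auto.
  - replace 0 with (0 + (l m - l m) * (l m - l m)) by ring.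
    apply CV_plus. apply IHm; intros; apply H; lia.
    assert (Un_cv (fun k => g k m - l m) (l m - l m)).
    { apply CV_minus. apply H; lia. intros eps He; exists O; intros; unfold R_dist; rewrite Rminus_diag, Rabs_R0; auto. }
    rewrite Rminus_diag in *. apply CV_mult; auto.
Qed.

Lemma sqrt_cv0 : forall u, (forall k, 0 <= u k) -> Un_cv u 0 -> Un_cv (fun k => sqrt (u k)) 0.
Proof.
  intros u Hp H eps He. destruct (H (eps*eps) ltac:(nra)) as [N HN]; exists N; intros.
  specialize (HN n H0). unfold R_dist in *. rewrite Rminus_0_r in *. rewrite Rabs_pos_eq in * by (auto; apply sqrt_pos).
  rewrite <- (sqrt_square eps) by lra. apply sqrt_lt_1; auto; nra.
Qed.

Lemma bw_Rn {n} (ys : nat -> Rn n) :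
  (forall i, (i < n)%nat -> exists B, forall k, Rabs (pt (ys k) i) <= B) ->
  exists phi y, (forall k, (phi k < phi (S k))%nat) /\ Un_cv (fun k => dist (ys (phi k)) y) 0.
Proof.
  intros HB. destruct (bwm (fun k i => pt (ys k) i) n HB) as [phi [l [Hphi Hl]]].
  exists phi, (mkRn n l); split; auto.
  apply sqrt_cv0. intros; apply sp_pos.
  eapply Un_cv_ext; [| apply (cv_sumsq n (fun k i => pt (ys (phi k)) i) l Hl)].
  intros k. simpl. apply sp_ext. intros i Hi. unfold diff. fold (pt (mkRn n l)). rewrite mkRn_pt; auto.
Qed.

Lemma sp_add_r : forall k e a b c, (forall i, (i < k)%nat -> c i = a i + b i) ->
  sumprod k e c = sumprod k e a + sumprod k e b.
Proof.
  intros. rewrite (sp_ext k e e c (fun i => 1 * a i + 1 * b i)).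
  rewrite sp_linr; ring. intros; split; auto. rewrite H; auto; ring.
Qed.

Lemma sp_add_sq : forall k a b c, (forall i, (i < k)%nat -> c i = a i + b i) ->
  sumprod k c c = sumprod k a a + 2 * sumprod k a b + sumprod k b b.
Proof.
  intros. rewrite (sp_add_r k c a b c H). rewrite !(sp_sym k c).
  rewrite (sp_add_r k a a b c H), (sp_add_r k b a b c H). rewrite (sp_sym k b a). ring.
Qed.

Lemma e_bound : forall k e h, sumprod k e e = 1 -> Rabs (sumprod k e h) <= nrm k h.
Proof.
  intros. pose proof (CS k e h). unfold nrm at 1 in H0. rewrite H, sqrt_1 in H0. lra.
Qed.

Lemma e_bound_sq : forall k e h, sumprod k e e = 1 -> sumprod k e h * sumprod k e h <= sumprod k h h.
Proof.
  intros. pose proof (CS_sq k e h). rewrite H in H0. lra.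
Qed.

Lemma le_eps : forall A B, (forall eps, 0 < eps -> A <= B + eps) -> A <= B.
Proof.
  intros. destruct (Rle_dec A B); auto. exfalso. specialize (H ((A - B)/2) ltac:(lra)). lra.
Qed.

Definition fv {n} (f : Rn n -> option R) (y : Rn n) : R := match f y with Some a => a | None => 0 end.

Definition LipOn {n} (f : Rn n -> option R) (xb : Rn n) (dL L0 : R) : Prop :=
  forall y z, dist y xb < dL -> dist z xb < dL ->
    exists p q, f y = Some p /\ f z = Some q /\ Rabs (p - q) <= L0 * dist y z.

Lemma LipOn_some {n} (f : Rn n -> option R) xb dL L0 y : LipOn f xb dL L0 -> dist y xb < dL -> f y = Some (fv f y).
Proof. intros H Hy. destruct (H y y Hy Hy) as [p [q [Hp _]]]. unfold fv; rewrite Hp; auto. Qed.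

Lemma LipOn_fv {n} (f : Rn n -> option R) xb dL L0 y z : LipOn f xb dL L0 -> dist y xb < dL -> dist z xb < dL ->
  Rabs (fv f y - fv f z) <= L0 * dist y z.
Proof. intros H Hy Hz. destruct (H y z Hy Hz) as [p [q [Hp [Hq Hpq]]]]. unfold fv; rewrite Hp, Hq; auto. Qed.

Lemma Rdiv_le_0_compat : forall a b, 0 <= a -> 0 < b -> 0 <= a / b.
Proof. intros. unfold Rdiv. apply Rmult_le_pos; auto. left; apply Rinv_0_lt_compat; auto. Qed.

Lemma mvi {n} (f : Rn n -> option R) xb dL L0 s a (x x' : Rn n) :
  LipOn f xb dL L0 -> 0 <= L0 -> 0 <= s -> s < a -> x <> x' ->
  fv f x' - fv f x > a * dist x x' ->
  dist x xb + (8*(L0+s)/(a-s) + 2) * dist x x' < dL ->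
  exists y v, dist y xb <= dist x xb + (8*(L0+s)/(a-s)+2) * dist x x' /\
              regular_subgradient f y v /\ s <= nv v.
Proof.
  intros HL HL0 Hs Hsa Hxx Hgap Hrad.
  set (r := dist x x') in *.
  assert (Hr : 0 < r). { destruct (dist_pos x x'); auto. exfalso; apply Hxx, dist_eq0; auto. }
  set (th := a - s). assert (Hth : 0 < th) by (unfold th; lra).
  set (M := L0 + s). assert (HM : 0 <= M) by (unfold M; lra).
  set (lam := 8*(L0+s)/(a-s) + 2) in *.
  assert (Hlam : lam * th = 8 * M + 2 * th). { unfold lam, th, M. field. lra. }
  assert (Hlam2 : 2 <= lam). { unfold lam. assert (0 <= 8*(L0+s)/(a-s)). apply Rdiv_le_0_compat; lra. lra. }
  set (Rr := lam * r). assert (HR : 0 < Rr) by (unfold Rr; nra).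
  set (al := th / (4 * r)). assert (Hal : 0 < al) by (unfold al; apply Rdiv_lt_0_compat; lra).
  set (K := M * M / (th * r) + al).
  assert (HK1 : 0 <= M * M / (th * r)) by (apply Rdiv_le_0_compat; nra).
  assert (HK : al <= K) by (unfold K; lra).
  set (e := fun i => (pt x' i - pt x i) / r).
  set (t := fun y : Rn n => sumprod n e (diff y x)).
  set (Q := fun y : Rn n => sumprod n (diff y x) (diff y x)).
  set (pen := fun y => al * ((t y - r) * (t y - r)) + K * (Q y - t y * t y)).
  set (Phi := fun y => fv f y - s * t y + pen y).
  set (Dm := fun y => t y <= r /\ Q y <= Rr * Rr).
  assert (He1 : sumprod n e e = 1).
  { assert (sumprod n e e = / (r * r) * sumprod n (diff x' x) (diff x' x)).
    { transitivity (sumprod n (fun i => /r * diff x' x i) (fun i => /r * diff x' x i)).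
      apply sp_ext; intros; split; unfold e, diff, pt; field; lra.
      rewrite sp_scall, sp_sym, sp_scall. field. lra. }
    rewrite H. fold (nrm n (diff x' x)) . rewrite <- nrm_sq. rewrite <- dist_nrm, dist_sym. fold r. field. lra. }
  assert (Ht : forall y, Rabs (t y) <= dist y x) by (intros; apply e_bound; auto).
  assert (Ht2 : forall y, t y * t y <= Q y) by (intros; apply e_bound_sq; auto).
  assert (HQ : forall y, Q y = dist y x * dist y x) by (intros; unfold Q; rewrite dist_nrm, nrm_sq; auto).
  assert (HDball : forall y, Dm y -> dist y x <= Rr /\ dist y xb < dL).
  { intros y [_ Hy]. assert (dist y x <= Rr). { rewrite HQ in Hy. pose proof (dist_pos y x). nra. }
    split; auto. pose proof (dist_triang y x xb). unfold Rr in H. lra. }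
  assert (Hxb : dist x xb < dL). { pose proof (dist_pos x x'). fold r in H. nra. }
  set (P := fun z : Rn n => fun i => (2*al*(t z - r) - 2*K*t z) * e i + 2*K * diff z x i).
  assert (Hexp : forall y z : Rn n, pen y - pen z = sumprod n (P z) (diff y z)
       + al * (sumprod n e (diff y z) * sumprod n e (diff y z))
       + K * (sumprod n (diff y z) (diff y z) - sumprod n e (diff y z) * sumprod n e (diff y z))).
  { intros y z.
    assert (Hsplit : forall i, (i < n)%nat -> diff y x i = diff z x i + diff y z i) by (intros; unfold diff; ring).
    assert (E1 : t y = t z + sumprod n e (diff y z)) by (apply sp_add_r; auto).
    assert (E2 : Q y = Q z + 2 * sumprod n (diff z x) (diff y z) + sumprod n (diff y z) (diff y z)) by (apply sp_add_sq; auto).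
    assert (E3 : sumprod n (P z) (diff y z) = (2*al*(t z - r) - 2*K*t z) * sumprod n e (diff y z) + 2*K*sumprod n (diff z x) (diff y z)) by (unfold P; apply sp_linl).
    unfold pen. rewrite E1, E2, E3. ring. }
  assert (Htau : forall y z : Rn n, Rabs (sumprod n e (diff y z)) <= dist y z) by (intros; apply e_bound; auto).
  assert (Htau2 : forall y z : Rn n, sumprod n e (diff y z) * sumprod n e (diff y z) <= sumprod n (diff y z) (diff y z)) by (intros; apply e_bound_sq; auto).
  assert (Htdiff : forall y z : Rn n, t y - t z = sumprod n e (diff y z)).
  { intros. assert (t y = t z + sumprod n e (diff y z)). apply sp_add_r; intros; unfold diff; ring. lra. }
  assert (HPc : forall y z : Rn n, Dm y -> Dm z -> Phi z <= Phi y + (L0 + s + nrm n (P z)) * dist y z).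
  { intros y z Hy Hz. pose proof (HDball y Hy) as [_ Hy']. pose proof (HDball z Hz) as [_ Hz'].
    pose proof (LipOn_fv f xb dL L0 y z HL Hy' Hz').
    pose proof (Hexp y z). pose proof (Htau y z). pose proof (Htau2 y z). pose proof (Htdiff y z).
    pose proof (CS n (P z) (diff y z)). rewrite <- dist_nrm in H4.
    pose proof (Rle_abs (fv f y - fv f z)). pose proof (Rle_abs (-(fv f y - fv f z))). rewrite Rabs_Ropp in H6.
    pose proof (Rle_abs (sumprod n e (diff y z))). pose proof (Rle_abs (-sumprod n e (diff y z))). rewrite Rabs_Ropp in H8.
    pose proof (Rle_abs (sumprod n (P z) (diff y z))). pose proof (Rle_abs (-sumprod n (P z) (diff y z))). rewrite Rabs_Ropp in H10.
    pose proof (sp_pos n (diff y z)).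
    set (tau := sumprod n e (diff y z)) in *.
    assert (0 <= al * (tau * tau)) by (apply Rmult_le_pos; [lra| apply Rle_0_sqr]).
    assert (0 <= K * (sumprod n (diff y z) (diff y z) - tau * tau)) by (apply Rmult_le_pos; lra).
    unfold Phi. nra. }
  assert (Hpen0 : forall y : Rn n, 0 <= pen y).
  { intros. unfold pen. pose proof (Ht2 y).
    assert (0 <= al * ((t y - r) * (t y - r))) by (apply Rmult_le_pos; [lra| apply Rle_0_sqr]).
    assert (0 <= K * (Q y - t y * t y)) by (apply Rmult_le_pos; lra). lra. }
  assert (Hlow : forall y : Rn n, Dm y -> fv f x - M * Rr <= Phi y).
  { intros y Hy. pose proof (HDball y Hy) as [Hy1 Hy2].
    pose proof (LipOn_fv f xb dL L0 y x HL Hy2 Hxb).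
    pose proof (Rle_abs (-(fv f y - fv f x))). rewrite Rabs_Ropp in H0.
    pose proof (Ht y). pose proof (Rle_abs (t y)). pose proof (Hpen0 y).
    unfold Phi, M. nra. }
  assert (Htx : t x = 0). { pose proof (Ht x). rewrite dist_self in H. pose proof (Rabs_pos (t x)). pose proof (Rle_abs (t x)). pose proof (Rle_abs (- t x)). rewrite Rabs_Ropp in H2. lra. }
  assert (HQx : Q x = 0). { rewrite HQ, dist_self; ring. }
  assert (HPhix : Phi x = fv f x + al * (r * r)). { unfold Phi, pen. rewrite Htx, HQx. ring. }
  assert (Hx'b : dist x' xb < dL). { pose proof (dist_triang x' x xb). rewrite (dist_sym x' x) in H. fold r in H.
     assert (r <= lam * r) by nra. lra. }
  assert (HKM : M * M <= K * (th * r)).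
  { unfold K. rewrite Rmult_plus_distr_r. replace (M * M / (th * r) * (th * r)) with (M * M) by (field; lra).
    assert (0 <= al * (th * r)) by (apply Rmult_le_pos; nra). lra. }
  assert (Hbd : forall y : Rn n, Dm y -> Phi y <= Phi x -> t y < r /\ Q y < Rr * Rr).
  { intros y Hy HPy. pose proof (HDball y Hy) as [Hy1 Hy2]. destruct Hy as [Hty HQy]. split.
    - destruct (Rlt_dec (t y) r) as [|Hn]; auto. exfalso. assert (Htr : t y = r) by lra.
      assert (HQ' : sumprod n (diff y x') (diff y x') = Q y - r * r).
      { rewrite (sp_add_sq n (diff y x) (fun i => (-r) * e i) (diff y x')).
        rewrite (sp_sym n (diff y x) (fun i => -r * e i)), !sp_scall, (sp_sym n e (fun i => -r * e i)), sp_scall, He1.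
        fold (t y). rewrite Htr. unfold Q. ring.
        intros; unfold diff, e, pt. field. lra. }
      set (p := dist y x').
      assert (Hp2 : p * p = Q y - t y * t y). { unfold p. rewrite dist_nrm, nrm_sq, HQ', Htr. ring. }
      pose proof (LipOn_fv f xb dL L0 y x' HL Hy2 Hx'b). fold p in H.
      pose proof (Rle_abs (-(fv f y - fv f x'))). rewrite Rabs_Ropp in H0.
      assert (HPy' : Phi y = fv f y - s * r + K * (p * p)). { unfold Phi, pen. rewrite Hp2, Htr. ring. }
      assert (HKp : 0 <= 4 * K * (K * (p * p) - L0 * p + th * r / 4)).
      { assert (HL0M : L0 * L0 <= M * M) by (unfold M; nra).
        assert (4 * K * (K * (p * p) - L0 * p + th * r / 4) = (2*K*p - L0)*(2*K*p - L0) + (K * (th * r) - L0 * L0)) by field.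
        rewrite H1. pose proof (Rle_0_sqr (2*K*p - L0)). unfold Rsqr in H2. lra. }
      assert (0 <= K * (p * p) - L0 * p + th * r / 4).
      { destruct (Rle_dec 0 (K * (p * p) - L0 * p + th * r / 4)); auto. exfalso.
        assert (0 < 4 * K) by lra. assert (4*K * (K * (p * p) - L0 * p + th * r / 4) < 0) by nra. lra. }
      assert (Hal2 : al * (r * r) = th * r / 4) by (unfold al; field; lra).
      assert (Ha : a = s + th) by (unfold th; ring).
      rewrite HPy', HPhix, Hal2 in HPy. rewrite Ha in Hgap. nra.
    - destruct (Rlt_dec (Q y) (Rr * Rr)) as [|Hn]; auto. exfalso. assert (HQR : Q y = Rr * Rr) by lra.
      assert (HyR : dist y x = Rr). { rewrite HQ in HQR. pose proof (dist_pos y x). nra. }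
      pose proof (LipOn_fv f xb dL L0 y x HL Hy2 Hxb). rewrite HyR in H.
      pose proof (Rle_abs (-(fv f y - fv f x))). rewrite Rabs_Ropp in H0.
      pose proof (Ht y). rewrite HyR in H1. pose proof (Rle_abs (t y)).
      assert (Hst : - s * t y >= - s * Rr) by nra.
      assert (Hpen : al * Rr * Rr / 2 <= pen y).
      { unfold pen. rewrite HQR. pose proof (Ht2 y). rewrite HQR in H3.
        destruct (Rle_dec (t y * t y) (Rr * Rr / 2)).
        - assert (0 <= al * ((t y - r) * (t y - r))) by (apply Rmult_le_pos; [lra| apply Rle_0_sqr]).
          assert (K * (Rr * Rr / 2) <= K * (Rr * Rr - t y * t y)) by (apply Rmult_le_compat_l; lra).
          assert (al * (Rr * Rr / 2) <= K * (Rr * Rr / 2)) by (apply Rmult_le_compat_r; nra). lra.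
        - assert (t y < 0). { destruct (Rlt_dec (t y) 0); auto. assert (Rr * Rr >= 4 * (r * r)) by (unfold Rr; assert (lam*lam >= 4) by nra; nra). assert (t y * t y <= r * r) by nra. lra. }
          assert (0 <= K * (Rr * Rr - t y * t y)) by (apply Rmult_le_pos; lra).
          assert (al * (Rr * Rr / 2) <= al * ((t y - r) * (t y - r))) by (apply Rmult_le_compat_l; nra). lra. }
      assert (Hkey : al * Rr * Rr / 2 = (lam * th) * lam * r / 8) by (unfold al, Rr; field; lra).
      rewrite Hlam in Hkey.
      assert (Hal2 : al * (r * r) = th * r / 4) by (unfold al; field; lra).
      assert (HPy2 : Phi y = fv f y - s * t y + pen y) by auto.
      rewrite HPhix, Hal2 in HPy.
      assert (M * Rr = M * lam * r) by (unfold Rr; ring).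
      assert (th * r <= th * lam * r / 2) by nra.
      assert (HML : L0 * Rr + s * Rr = M * Rr) by (unfold M; ring).
      assert (Hk2 : (8 * M + 2 * th) * lam * r / 8 = M * lam * r + th * lam * r / 4) by field.
      assert (0 < th * r) by nra.
      lra. }
  assert (HDx : Dm x) by (split; [rewrite Htx; lra | rewrite HQx; nra]).
  assert (Hcvk : forall (u : nat -> Rn n) y eps, Un_cv (fun k => dist (u k) y) 0 -> 0 < eps ->
            exists N, forall k, (N <= k)%nat -> dist (u k) y < eps).
  { intros u y eps Hc He. destruct (Hc eps He) as [N HN]. exists N. intros k Hk. specialize (HN k Hk).
    unfold R_dist in HN. rewrite Rminus_0_r, Rabs_pos_eq in HN by apply dist_pos. auto. }
  assert (Hmin : exists ys, Dm ys /\ forall y, Dm y -> Phi ys <= Phi y).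
  { set (E := fun z => exists y, Dm y /\ z = - Phi y).
    destruct (completeness E) as [l [Hl1 Hl2]].
    { exists (-(fv f x - M * Rr)). intros z [y [Hy ->]]. pose proof (Hlow y Hy). lra. }
    { exists (- Phi x), x; auto. }
    assert (Hm1 : forall y, Dm y -> - l <= Phi y). { intros. assert (E (- Phi y)) by (exists y; auto). apply Hl1 in H0. lra. }
    assert (Hm2 : forall k, exists y, Dm y /\ Phi y < - l + / (INR k + 1)).
    { intros k. apply NNPP; intros Hn. assert (Hp : 0 < / (INR k + 1)). { apply Rinv_0_lt_compat. pose proof (pos_INR k); lra. }
      assert (l <= l - / (INR k + 1)). { apply Hl2. intros z [y [Hy ->]]. destruct (Rle_dec (- Phi y) (l - / (INR k + 1))); auto.
        exfalso; apply Hn; exists y; split; auto; lra. }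
      lra. }
    set (ysq := fun k => proj1_sig (constructive_indefinite_description _ (Hm2 k))).
    assert (Hysq : forall k, Dm (ysq k) /\ Phi (ysq k) < - l + / (INR k + 1)).
    { intros; unfold ysq; destruct (constructive_indefinite_description _ (Hm2 k)); auto. }
    destruct (bw_Rn ysq) as [phi [ystar [Hphi Hcv]]].
    { intros i Hi. exists (Rabs (pt x i) + Rr). intros k. destruct (HDball _ (proj1 (Hysq k))) as [Hk _].
      pose proof (dist_coord (ysq k) x i Hi). pose proof (Rabs_triang (pt (ysq k) i - pt x i) (pt x i)).
      replace (pt (ysq k) i - pt x i + pt x i) with (pt (ysq k) i) in H0 by ring. lra. }
    assert (HDs : Dm ystar).
    { split.
      - apply le_eps. intros eps He. destruct (Hcvk _ _ eps Hcv He) as [N HN]. specialize (HN N (le_n _)).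
        pose proof (Htdiff ystar (ysq (phi N))). pose proof (Htau ystar (ysq (phi N))). rewrite dist_sym in HN.
        pose proof (Rle_abs (sumprod n e (diff ystar (ysq (phi N))))). destruct (Hysq (phi N)) as [[Ht1 _] _]. lra.
      - assert (dist ystar x <= Rr).
        { apply le_eps. intros eps He. destruct (Hcvk _ _ eps Hcv He) as [N HN]. specialize (HN N (le_n _)).
          pose proof (dist_triang ystar (ysq (phi N)) x). rewrite (dist_sym ystar (ysq (phi N))) in H.
          destruct (HDball _ (proj1 (Hysq (phi N)))). lra. }
        rewrite HQ. pose proof (dist_pos ystar x). nra. }
    exists ystar; split; auto. intros y Hy. apply Rle_trans with (- l); auto.
    apply le_eps. intros eps He.
    set (Cc := L0 + s + nrm n (P ystar)). assert (HCc : 0 <= Cc) by (unfold Cc; pose proof (nrm_pos n (P ystar)); lra).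
    assert (He2 : 0 < eps / 2 / (Cc + 1)) by (apply Rdiv_lt_0_compat; lra).
    destruct (Hcvk _ _ _ Hcv He2) as [N1 HN1]. destruct (inv_small (eps/2) ltac:(lra)) as [N2 HN2].
    set (k := Nat.max N1 N2). specialize (HN1 k ltac:(unfold k; lia)).
    specialize (HN2 (phi k) ltac:(pose proof (incr_ge phi Hphi k); unfold k in *; lia)).
    destruct (Hysq (phi k)) as [Hk1 Hk2].
    pose proof (HPc (ysq (phi k)) ystar Hk1 HDs). fold Cc in H.
    assert (Cc * dist (ysq (phi k)) ystar <= eps / 2).
    { apply Rle_trans with (Cc * (eps / 2 / (Cc + 1))). apply Rmult_le_compat_l; lra.
      unfold Rdiv. rewrite <- Rmult_assoc. rewrite (Rmult_comm Cc). rewrite Rmult_assoc. 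
      assert (Cc * / (Cc + 1) <= 1). { apply (Rmult_le_reg_r (Cc + 1)). lra. rewrite Rmult_assoc, Rinv_l by lra. lra. }
      assert (0 <= eps * / 2) by lra. nra. }
    lra. }
  destruct Hmin as [ys [HDs Hmn]].
  destruct (Hbd ys HDs (Hmn x HDx)) as [Hti HQi].
  destruct (HDball ys HDs) as [Hysx Hysb].
  assert (HdysR : dist ys x < Rr). { rewrite HQ in HQi. pose proof (dist_pos ys x). nra. }
  set (v := mkRn n (fun i => s * e i + (-1) * P ys i)).
  assert (Hvpt : forall h, sumprod n (pt v) h = s * sumprod n e h + (-1) * sumprod n (P ys) h).
  { intros h. rewrite <- sp_linl. apply sp_ext; intros; split; auto. unfold v; rewrite mkRn_pt; auto. }
  exists ys, v. split; [|split].
  - pose proof (dist_triang ys x xb). change (dist ys xb <= dist x xb + lam * r). unfold Rr in Hysx. lra.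
  - exists (fv f ys). split. apply (LipOn_some f xb dL L0); auto.
    intros eps Heps.
    assert (HaK : 0 < al + K) by lra.
    exists (Rmin (Rmin (r - t ys) (Rr - dist ys x)) (eps / (al + K))). split.
    { apply Rmin_pos; [apply Rmin_pos|apply Rdiv_lt_0_compat]; lra. }
    intros y Hy. pose proof (Rmin_l (Rmin (r - t ys) (Rr - dist ys x)) (eps / (al + K))).
    pose proof (Rmin_r (Rmin (r - t ys) (Rr - dist ys x)) (eps / (al + K))).
    pose proof (Rmin_l (r - t ys) (Rr - dist ys x)). pose proof (Rmin_r (r - t ys) (Rr - dist ys x)).
    assert (HDy : Dm y).
    { split.
      - pose proof (Htdiff y ys). pose proof (Htau y ys). pose proof (Rle_abs (sumprod n e (diff y ys))). lra.
      - pose proof (dist_triang y ys x). rewrite HQ. pose proof (dist_pos y x). assert (dist y x < Rr) by lra. nra. }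
    destruct (HDball y HDy) as [_ Hyb]. rewrite (LipOn_some f xb dL L0 y HL Hyb).
    pose proof (Hmn y HDy). pose proof (Hexp y ys).
    unfold inner_diff. rewrite Hvpt. pose proof (Htdiff y ys).
    pose proof (Htau2 y ys).
    set (tau := sumprod n e (diff y ys)) in *.
    set (Qh := sumprod n (diff y ys) (diff y ys)) in *.
    assert (HQh : Qh = dist y ys * dist y ys) by (unfold Qh; rewrite dist_nrm, nrm_sq; auto).
    assert (Hdd : (al + K) * Qh <= eps * dist y ys).
    { rewrite HQh. pose proof (dist_pos y ys). assert (dist y ys <= eps / (al + K)) by lra.
      assert ((al + K) * dist y ys <= eps). { apply (Rmult_le_reg_r (/ (al + K))). apply Rinv_0_lt_compat; lra.
        replace ((al + K) * dist y ys * / (al + K)) with (dist y ys) by (field; lra). auto. }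
      nra. }
    assert (0 <= tau * tau) by apply Rle_0_sqr.
    assert (al * (tau * tau) <= al * Qh) by (apply Rmult_le_compat_l; lra).
    assert (K * (Qh - tau * tau) <= K * Qh) by (apply Rmult_le_compat_l; lra).
    unfold Phi in H3. assert (s * t y - s * t ys = s * tau) by (rewrite <- H5; ring). lra.
  - assert (HPe : sumprod n (P ys) e = 2 * al * (t ys - r)).
    { unfold P. rewrite sp_linl, He1, (sp_sym n (diff ys x)). fold (t ys). ring. }
    assert (sumprod n (pt v) e = s - 2 * al * (t ys - r)) by (rewrite Hvpt, He1, HPe; ring).
    pose proof (CS1 n (pt v) e). unfold nrm at 2 in H0. rewrite He1, sqrt_1 in H0. fold (nv v) in H0.
    assert (0 <= al * (r - t ys)) by (apply Rmult_le_pos; lra). lra.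
Qed.

Lemma nrm_ext : forall k g h, (forall i, (i < k)%nat -> g i = h i) -> nrm k g = nrm k h.
Proof. intros. unfold nrm. f_equal. apply sp_ext. intros; split; auto. Qed.

Lemma nv_triang {n} (a b : Rn n) : nv a <= nv b + dist a b.
Proof.
  unfold nv. rewrite dist_nrm. rewrite (nrm_ext n (pt a) (fun i => pt b i + diff a b i)).
  apply nrm_triang. intros; unfold diff, pt; ring.
Qed.

Lemma reg_bound {n} (f : Rn n -> option R) xb dL L0 y v :
  LipOn f xb dL L0 -> 0 <= L0 -> dist y xb < dL / 2 -> regular_subgradient f y v -> nv v <= L0 + 1.
Proof.
  intros HL HL0 Hy [fy [Hfy Hreg]].
  destruct (Rle_dec (nv v) 0). lra.
  assert (Hnv : 0 < nv v) by lra.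
  destruct (Hreg 1 ltac:(lra)) as [d [Hd Hd2]].
  set (tau := Rmin d (dL / 2) / (2 * nv v)).
  assert (Hm : 0 < Rmin d (dL/2)). { apply Rmin_pos; auto. pose proof (dist_pos y xb); lra. }
  assert (Htau : 0 < tau) by (unfold tau; apply Rdiv_lt_0_compat; lra).
  assert (Htn : tau * nv v = Rmin d (dL/2) / 2) by (unfold tau; field; lra).
  pose proof (Rmin_l d (dL/2)). pose proof (Rmin_r d (dL/2)).
  set (z := lin 1 y tau v).
  assert (Hzy : dist z y = tau * nv v). { unfold z; rewrite dist_ray, Rabs_pos_eq; lra. }
  assert (Hzb : dist z xb < dL). { pose proof (dist_triang z y xb). lra. }
  assert (Hyb : dist y xb < dL) by lra.
  specialize (Hd2 z ltac:(lra)). rewrite (LipOn_some f xb dL L0 z HL Hzb) in Hd2.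
  assert (fy = fv f y). { rewrite (LipOn_some f xb dL L0 y HL Hyb) in Hfy. congruence. }
  subst fy. unfold z in Hd2 at 2. rewrite inner_ray in Hd2. fold z in Hd2.
  pose proof (LipOn_fv f xb dL L0 z y HL Hzb Hyb). pose proof (Rle_abs (fv f z - fv f y)).
  rewrite Hzy in *. rewrite <- nrm_sq in Hd2. fold (nv v) in Hd2.
  assert (tau * nv v * (nv v - L0 - 1) <= 0) by nra.
  assert (0 < tau * nv v) by nra.
  destruct (Rle_dec (nv v) (L0 + 1)); auto. nra.
Qed.

Lemma calm_contra {n} (f : Rn n -> option R) xb dL L0 v b d0 :
  LipOn f xb dL L0 -> 0 < dL -> 0 < d0 -> 0 <= b -> b < nv v -> regular_subgradient f xb v ->
  (forall q, calm_set f xb d0 q -> ER_le q (ERfin b)) -> False.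
Proof.
  intros HL HdL Hd0 Hb Hbv [fb [Hfb Hreg]] Hcalm.
  set (eps := (nv v - b) / 2).
  destruct (Hreg eps ltac:(unfold eps; lra)) as [d [Hd Hd2]].
  set (mm := Rmin (Rmin d d0) dL).
  assert (Hm : 0 < mm) by (unfold mm; repeat apply Rmin_pos; auto).
  pose proof (Rmin_l (Rmin d d0) dL). pose proof (Rmin_r (Rmin d d0) dL). pose proof (Rmin_l d d0). pose proof (Rmin_r d d0).
  fold mm in H, H0.
  set (tau := mm / (2 * nv v)).
  assert (Htau : 0 < tau) by (unfold tau; apply Rdiv_lt_0_compat; lra).
  assert (Htn : tau * nv v = mm / 2) by (unfold tau; field; lra).
  set (y := lin 1 xb tau v).
  assert (Hyx : dist y xb = tau * nv v). { unfold y; rewrite dist_ray, Rabs_pos_eq; lra. }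
  assert (Hyb : dist y xb < dL) by lra.
  assert (Hxb : dist xb xb < dL) by (rewrite dist_self; lra).
  assert (Hne : y <> xb). { intros Heq. rewrite Heq, dist_self in Hyx. nra. }
  assert (Hyd0 : dist y xb < d0) by lra.
  specialize (Hcalm _ (ex_intro _ y (conj Hne (conj Hyd0 eq_refl)))).
  rewrite (LipOn_some f xb dL L0 y HL Hyb), Hfb in Hcalm. simpl in Hcalm.
  assert (Hyd : dist y xb < d) by lra.
  specialize (Hd2 y Hyd). rewrite (LipOn_some f xb dL L0 y HL Hyb) in Hd2.
  unfold y in Hd2 at 2. rewrite inner_ray in Hd2. fold y in Hd2. rewrite <- nrm_sq in Hd2. fold (nv v) in Hd2.
  rewrite Hyx in *.
  assert (Hq : fv f y - fb >= tau * nv v * (nv v - eps)) by nra.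
  assert (0 < tau * nv v) by nra.
  assert (Rabs (fv f y - fb) <= b * (tau * nv v)).
  { apply (Rmult_le_compat_r (tau * nv v)) in Hcalm; [| lra]. unfold Rdiv in Hcalm.
    rewrite Rmult_assoc, Rinv_l in Hcalm by lra. lra. }
  pose proof (Rle_abs (fv f y - fb)). unfold eps in Hq. nra.
Qed.

Lemma dq_nonneg_contra {n} (f : Rn n -> option R) xb x b :
  x <> xb -> b < 0 -> ER_le (dq (f x) (f xb) (dist x xb)) (ERfin b) -> False.
Proof.
  intros Hne Hb H. assert (0 < dist x xb). { destruct (dist_pos x xb); auto. exfalso; apply Hne, dist_eq0; auto. }
  destruct (f x), (f xb); simpl in H; auto.
  assert (0 <= Rabs (r - r0) / dist x xb) by (apply Rdiv_le_0_compat; [apply Rabs_pos| auto]). lra.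
Qed.

Lemma core {n} (f : Rn n -> option R) xb :
  finite_lipschitz_near f xb -> (forall v, subgradient f xb v -> regular_subgradient f xb v) ->
  forall b a, b < a -> (exists d0, 0 < d0 /\ forall q, calm_set f xb d0 q -> ER_le q (ERfin b)) ->
  exists d, 0 < d /\ forall q, lip_set f xb d q -> ER_le q (ERfin a).
Proof.
  intros [dL [L [HdL HLr]]] Hreg b a Hba [d0 [Hd0 Hcalm]].
  set (L0 := Rabs L). assert (HL0 : 0 <= L0) by apply Rabs_pos.
  assert (HL : LipOn f xb dL L0).
  { intros y z Hy Hz. destruct (HLr y z Hy Hz) as [p [q [Hp [Hq Hpq]]]]. exists p, q; repeat split; auto.
    pose proof (Rle_abs L). pose proof (dist_pos y z). unfold L0. nra. }
  destruct (Rlt_dec b 0) as [Hb|Hb].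
  { exists d0; split; auto. intros q [x [x' [Hxx [Hx [Hx' ->]]]]]. exfalso.
    destruct (classic (x = xb)) as [Heq|Hne].
    - subst x. apply (dq_nonneg_contra f xb x' b); auto. apply Hcalm. exists x'; repeat split; auto.
    - apply (dq_nonneg_contra f xb x b); auto. apply Hcalm. exists x; repeat split; auto. }
  apply Rnot_lt_le in Hb.
  set (s := (a + b) / 2).
  set (lam := 8*(L0+s)/(a-s) + 2).
  assert (Hlam : 2 <= lam). { unfold lam. assert (0 <= 8*(L0+s)/(a-s)). apply Rdiv_le_0_compat; unfold s; lra. lra. }
  set (del := dL / (4 * (1 + 2 * lam))).
  assert (Hdel : 0 < del) by (unfold del; apply Rdiv_lt_0_compat; lra).
  assert (Hdel2 : (1 + 2 * lam) * del = dL / 4) by (unfold del; field; lra).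
  apply NNPP; intros Hno.
  assert (Hk : forall k : nat, exists y v, dist y xb <= (1 + 2 * lam) * (del / (INR k + 1)) /\
                 regular_subgradient f y v /\ s <= nv v).
  { intros k. assert (Hpk : 0 < INR k + 1) by (pose proof (pos_INR k); lra).
    set (dk := del / (INR k + 1)). assert (Hdk : 0 < dk) by (unfold dk; apply Rdiv_lt_0_compat; lra).
    assert (Hdkd : dk <= del). { unfold dk. apply (Rmult_le_reg_r (INR k + 1)); auto. unfold Rdiv.
      rewrite Rmult_assoc, Rinv_l by lra. pose proof (pos_INR k). nra. }
    assert (Hbad : exists q, lip_set f xb dk q /\ ~ ER_le q (ERfin a)).
    { apply NNPP; intros Hn. apply Hno. exists dk; split; auto. intros q Hq. apply NNPP; intros Hq2. apply Hn; eauto. }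
    destruct Hbad as [q [[x [x' [Hxx [Hx [Hx' ->]]]]] Hq]].
    assert (Hxb : dist x xb < dL) by (assert (del < dL) by (unfold del; apply Rmult_lt_reg_r with (4 * (1 + 2*lam)); [lra|]; unfold Rdiv; rewrite Rmult_assoc, Rinv_l by lra; nra); lra).
    assert (Hx'b : dist x' xb < dL) by (assert (del < dL) by (unfold del; apply Rmult_lt_reg_r with (4 * (1 + 2*lam)); [lra|]; unfold Rdiv; rewrite Rmult_assoc, Rinv_l by lra; nra); lra).
    rewrite (LipOn_some f xb dL L0 x HL Hxb), (LipOn_some f xb dL L0 x' HL Hx'b) in Hq. simpl in Hq.
    set (r := dist x x') in *.
    assert (Hr : 0 < r). { destruct (dist_pos x x'); auto. exfalso; apply Hxx, dist_eq0; auto. }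
    assert (Hrle : r <= 2 * dk). { pose proof (dist_triang x xb x'). rewrite (dist_sym xb x') in H. fold r in H. lra. }
    assert (Hgap : Rabs (fv f x - fv f x') > a * r).
    { apply Rnot_le_lt in Hq. apply (Rmult_lt_compat_r r) in Hq; auto. unfold Rdiv in Hq. rewrite Rmult_assoc, Rinv_l in Hq by lra. lra. }
    assert (Hsa : s < a) by (unfold s; lra). assert (Hs0 : 0 <= s) by (unfold s; lra).
    destruct (Rle_dec (fv f x) (fv f x')) as [Hle|Hgt].
    - rewrite Rabs_minus_sym, Rabs_pos_eq in Hgap by lra.
      destruct (mvi f xb dL L0 s a x x' HL HL0 Hs0 Hsa Hxx ltac:(fold r; lra)) as [y [v [Hy1 [Hy2 Hy3]]]].
      { fold r. fold lam. assert (lam * r <= 2 * lam * dk) by nra. assert ((1 + 2 * lam) * dk <= dL / 4) by nra. lra. }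
      exists y, v; repeat split; auto. fold r lam in Hy1. fold dk. assert (lam * r <= 2 * lam * dk) by nra. lra.
    - rewrite Rabs_pos_eq in Hgap by lra.
      assert (Hx'x : x' <> x) by auto.
      assert (Hrs : dist x' x = r) by (unfold r; apply dist_sym).
      destruct (mvi f xb dL L0 s a x' x HL HL0 Hs0 Hsa Hx'x ltac:(rewrite Hrs; lra)) as [y [v [Hy1 [Hy2 Hy3]]]].
      { rewrite Hrs. fold lam. assert (lam * r <= 2 * lam * dk) by nra. assert ((1 + 2 * lam) * dk <= dL / 4) by nra. lra. }
      exists y, v; repeat split; auto. rewrite Hrs in Hy1. fold lam in Hy1. fold dk. assert (lam * r <= 2 * lam * dk) by nra. lra. }
  set (C := (1 + 2 * lam) * del). assert (HC : 0 < C) by (unfold C; nra).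
  set (yk := fun k => proj1_sig (constructive_indefinite_description _ (Hk k))).
  set (vk := fun k => proj1_sig (constructive_indefinite_description _ (proj2_sig (constructive_indefinite_description _ (Hk k))))).
  assert (Hyv : forall k, dist (yk k) xb <= C * / (INR k + 1) /\ regular_subgradient f (yk k) (vk k) /\ s <= nv (vk k)).
  { intros k. unfold yk, vk. destruct (constructive_indefinite_description _ (Hk k)) as [y Hy]. simpl.
    destruct (constructive_indefinite_description _ Hy) as [v Hv]. simpl. unfold C. unfold Rdiv in Hv. rewrite <- Rmult_assoc in Hv. auto. }
  assert (Hyb : forall k, dist (yk k) xb < dL / 2).
  { intros k. destruct (Hyv k) as [H1 _]. assert (C * / (INR k + 1) <= C).
    { assert (/ (INR k + 1) <= 1). { rewrite <- Rinv_1. apply Rinv_le_contravar. lra. pose proof (pos_INR k); lra. }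
      assert (0 < / (INR k + 1)) by (apply Rinv_0_lt_compat; pose proof (pos_INR k); lra). nra. }
    unfold C in *. lra. }
  destruct (bw_Rn vk) as [phi [v [Hphi Hcv]]].
  { intros i Hi. exists (L0 + 1). intros k. destruct (Hyv k) as [_ [H2 _]].
    pose proof (reg_bound f xb dL L0 (yk k) (vk k) HL HL0 (Hyb k) H2). pose proof (coord_le_nrm n (pt (vk k)) i Hi).
    fold (nv (vk k)) in H0. lra. }
  assert (Hcvx : Un_cv (fun k => dist (yk (phi k)) xb) 0).
  { intros eps He. destruct (inv_small (eps / C)) as [N HN]. apply Rdiv_lt_0_compat; lra.
    exists N. intros k Hk'. unfold R_dist. rewrite Rminus_0_r, Rabs_pos_eq by apply dist_pos.
    specialize (HN (phi k) ltac:(pose proof (incr_ge phi Hphi k); lia)).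
    destruct (Hyv (phi k)) as [H1 _].
    assert (C * / (INR (phi k) + 1) < C * (eps / C)) by (apply Rmult_lt_compat_l; auto).
    replace (C * (eps / C)) with eps in H by (field; lra). lra. }
  assert (Hxbb : dist xb xb < dL) by (rewrite dist_self; lra).
  assert (Hsub : subgradient f xb v).
  { exists (fun k => yk (phi k)), (fun k => vk (phi k)), (fun k => fv f (yk (phi k))), (fv f xb).
    repeat split; auto.
    - intros k. apply (Hyv (phi k)).
    - intros k. apply (LipOn_some f xb dL L0); auto. specialize (Hyb (phi k)). lra.
    - apply (LipOn_some f xb dL L0); auto.
    - intros eps He. destruct (Hcvx (eps / (L0 + 1))) as [N HN]. apply Rdiv_lt_0_compat; lra.
      exists N. intros k Hk'. specialize (HN k Hk'). unfold R_dist in *. rewrite Rminus_0_r, Rabs_pos_eq in HN by apply dist_pos.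
      assert (Hyk : dist (yk (phi k)) xb < dL) by (specialize (Hyb (phi k)); lra).
      pose proof (LipOn_fv f xb dL L0 _ _ HL Hyk Hxbb).
      assert (L0 * dist (yk (phi k)) xb <= (L0 + 1) * dist (yk (phi k)) xb) by (pose proof (dist_pos (yk (phi k)) xb); nra).
      assert ((L0 + 1) * dist (yk (phi k)) xb < (L0 + 1) * (eps / (L0 + 1))) by (apply Rmult_lt_compat_l; lra).
      replace ((L0 + 1) * (eps / (L0 + 1))) with eps in H1 by (field; lra). lra. }
  apply Hreg in Hsub.
  assert (Hsv : s <= nv v).
  { apply le_eps. intros eps He. destruct (Hcv eps He) as [N HN]. specialize (HN N (le_n _)).
    unfold R_dist in HN. rewrite Rminus_0_r, Rabs_pos_eq in HN by apply dist_pos.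
    pose proof (nv_triang (vk (phi N)) v). destruct (Hyv (phi N)) as [_ [_ H3]]. lra. }
  apply (calm_contra f xb dL L0 v b d0 HL HdL Hd0 Hb); auto. unfold s in Hsv; lra.
Qed.

Theorem mainTheorem2 (n : nat) (f : Rn n -> option R) (xb : Rn n)
  (Hlip : finite_lipschitz_near f xb)
  (Hreg : forall v, regular_subgradient f xb v <-> subgradient f xb v) :
  (exists c, is_calm f xb c) /\ (forall c, is_calm f xb c <-> is_lip f xb c).
Proof.
  assert (Hreg' : forall v, subgradient f xb v -> regular_subgradient f xb v) by (intros; apply Hreg; auto).
  destruct (glb_exists (fun s => exists d, 0 < d /\ is_lub_ER (calm_set f xb d) s)) as [c Hc].
  assert (Hlc : is_lip f xb c).
  { split.
    - intros s [d [Hd Hs]]. destruct (lub_exists (calm_set f xb d)) as [cs Hcs].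
      apply ER_le_trans with cs. apply (proj1 Hc). exists d; auto.
      apply (proj2 Hcs). intros q [x [Hne [Hx ->]]]. apply (proj1 Hs).
      exists x, xb. repeat split; auto. rewrite dist_self; auto.
    - intros u Hu.
      assert (Hsmall : forall b, ~ ER_le (ERfin b) c -> exists d0, 0 < d0 /\ forall q, calm_set f xb d0 q -> ER_le q (ERfin b)).
      { intros b Hb. apply NNPP; intros Hn. apply Hb. apply (proj2 Hc). intros cs [d [Hd Hcs]].
        destruct (ER_le_total (ERfin b) cs) as [|Hcb]; auto. exfalso. apply Hn. exists d; split; auto.
        intros q Hq. apply ER_le_trans with cs; auto. apply (proj1 Hcs); auto. }
      assert (Hup : forall b a, b < a -> ~ ER_le (ERfin b) c -> ER_le u (ERfin a)).
      { intros b a Hba Hb. destruct (core f xb Hlip Hreg' b a Hba (Hsmall b Hb)) as [d [Hd Hda]].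
        destruct (lub_exists (lip_set f xb d)) as [sd Hsd].
        apply ER_le_trans with sd. apply Hu. exists d; auto. apply (proj2 Hsd). auto. }
      destruct c as [c0| |]; destruct u as [u0| |]; simpl; auto.
      + destruct (Rle_dec u0 c0); auto. exfalso.
        pose proof (Hup (c0 + (u0 - c0)/3) (c0 + 2*(u0 - c0)/3) ltac:(lra) ltac:(simpl; lra)). simpl in H. lra.
      + pose proof (Hup (c0 + 1) (c0 + 2) ltac:(lra) ltac:(simpl; lra)) as HH; simpl in HH; auto.
      + pose proof (Hup (u0 - 2) (u0 - 1) ltac:(lra) ltac:(simpl; auto)) as HH; simpl in HH; lra.
      + pose proof (Hup 0 1 ltac:(lra) ltac:(simpl; auto)) as HH; simpl in HH; auto. }
  split. exists c; auto.
  intros c'. split; intros H.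
  - assert (c' = c) by (apply (glb_unique _ c' c H Hc)). subst; auto.
  - assert (c' = c) by (apply (glb_unique _ c' c H Hlc)). subst; auto.
Qed.
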